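(* Let $\beta>1$ and $l\in(-1,0]$, put $r=l+1$, and let $T$ be the $(-\beta,l)$-transformation of $[l,r)$. Let $\mathrm{Fin}(-\beta,l)$ be the set of $x\in[l,r)$ whose $(-\beta,l)$-expansion $d(x)$ ends in $0^\omega$ (equivalently, $T^n(x)=0$ for some $n\in\mathbb{N}$). Then $\mathrm{Fin}(-\beta,l)\neq\{0\}$ if and only if $-\frac{1}{\beta}\in[l,r)$ or $\frac{1}{\beta}\in[l,r)$.
   Context: For $\beta>1$ and $l\in(-1,0]$, $r=l+1$, the $(-\beta,l)$-transformation is $T:[l,r)\to[l,r)$, $T(x)=-\beta x-\lfloor -\beta x-l\rfloor$. The $(-\beta,l)$-expansion of $x\in[l,r)$ is the integer sequence $d(x)=x_1x_2x_3\cdots$ with $x_i=\lfloor -\beta T^{i-1}(x)-l\rfloor$ for $i\ge1$; one has $x=\sum_{i\ge1}x_i(-\beta)^{-i}$. *)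

(* Defs.v *)
From Stdlib Require Import Reals ZArith.
Open Scope R_scope.

(* floor of a real number: Int_part x = up x - 1, and Stdlib's [up x] is the
   unique integer with x < up x <= x + 1, so Int_part x = floor x. *)
Definition floorR (x : R) : Z := Int_part x.

Definition negbeta_T (beta l : R) (x : R) : R :=
  - beta * x - IZR (floorR (- beta * x - l)).

Fixpoint negbeta_Titer (beta l : R) (n : nat) (x : R) : R :=
  match n with
  | O => x
  | S k => negbeta_T beta l (negbeta_Titer beta l k x)
  end.

(* the (-beta,l)-expansion d(x) = x_1 x_2 ...; here [negbeta_digit beta l x i]
   is x_{i+1} = floor(-beta T^i(x) - l)  (0-based indexing). *)
Definition negbeta_digit (beta l x : R) (i : nat) : Z :=
  floorR (- beta * negbeta_Titer beta l i x - l).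

Definition negbeta_Fin (beta l : R) (x : R) : Prop :=
  l <= x < l + 1 /\
  exists N : nat, forall i : nat, (N <= i)%nat -> negbeta_digit beta l x i = 0%Z.

(* Main.v *)
Require Import Defs.
From Stdlib Require Import Reals ZArith Lra Lia.
Open Scope R_scope.

Lemma floor_eq (z : R) (k : Z) : IZR k <= z < IZR k + 1 -> floorR z = k.
Proof.
  intros [H1 H2]. unfold floorR, Int_part.
  assert (up z = (k+1)%Z) as E.
  { symmetry. apply tech_up; rewrite plus_IZR; lra. }
  rewrite E. lia.
Qed.

Lemma T_range beta l y : l <= negbeta_T beta l y < l + 1.
Proof.
  unfold negbeta_T, floorR.
  destruct (base_Int_part (- beta * y - l)). lra.
Qed.

Lemma Titer_range beta l x n : l <= x < l + 1 ->
  l <= negbeta_Titer beta l n x < l + 1.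
Proof. intros H. destruct n; simpl; [exact H | apply T_range]. Qed.

Lemma T_zero beta l y : 1 < beta -> -1 < l <= 0 -> l <= y < l + 1 ->
  negbeta_T beta l y = 0 ->
  y = 0 \/ ((l <= - (1 / beta) < l + 1) \/ (l <= 1 / beta < l + 1)).
Proof.
  intros hb hl hy HT. unfold negbeta_T in HT.
  set (k := floorR (- beta * y - l)) in *.
  assert (Ey : y = - IZR k / beta) by (replace (- IZR k) with (beta*y) by lra; field; lra).
  assert (k = 0%Z \/ (1 <= k)%Z \/ (k <= -1)%Z) as [K|[K|K]] by lia.
  - left. rewrite Ey, K. unfold Rdiv. lra.
  - right; left. apply IZR_le in K.
    assert (IZR k / beta >= 1 / beta).
    { unfold Rdiv. apply Rle_ge, Rmult_le_compat_r; [|lra].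
      left; apply Rinv_0_lt_compat; lra. }
    assert (0 < 1/beta) by (apply Rdiv_lt_0_compat; lra).
    unfold Rdiv in *. rewrite Ey in hy. lra.
  - right; right. apply IZR_le in K.
    assert (- IZR k / beta >= 1 / beta).
    { unfold Rdiv. apply Rle_ge, Rmult_le_compat_r; [|lra].
      left; apply Rinv_0_lt_compat; lra. }
    assert (0 < 1/beta) by (apply Rdiv_lt_0_compat; lra).
    rewrite Ey in hy. unfold Rdiv in *. lra.
Qed.

Lemma iter_zero beta l x : 1 < beta -> -1 < l <= 0 -> l <= x < l + 1 ->
  forall n, negbeta_Titer beta l n x = 0 ->
  x = 0 \/ ((l <= - (1 / beta) < l + 1) \/ (l <= 1 / beta < l + 1)).
Proof.
  intros hb hl hx n. induction n as [|n IH]; simpl; intros H.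
  - left; exact H.
  - destruct (T_zero beta l _ hb hl (Titer_range beta l x n hx) H) as [H0|H0].
    + apply IH, H0.
    + right; exact H0.
Qed.

Lemma iter_zero_T beta l y : -1 < l <= 0 -> l <= y < l + 1 ->
  negbeta_T beta l 0 = 0.
Proof.
  intros hl _. unfold negbeta_T.
  rewrite (floor_eq _ 0%Z); [simpl; lra| simpl; lra].
Qed.

Theorem mainTheorem1 (beta l : R) (hbeta : 1 < beta) (hl : -1 < l <= 0) :
  ~ (forall x : R, negbeta_Fin beta l x <-> x = 0) <->
  ((l <= - (1 / beta) < l + 1) \/ (l <= 1 / beta < l + 1)).
Proof.
  assert (Hz : negbeta_T beta l 0 = 0).
  { unfold negbeta_T. rewrite (floor_eq _ 0%Z); simpl; lra. }
  assert (Hiz : forall n, negbeta_Titer beta l n 0 = 0).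
  { induction n; simpl; [reflexivity| rewrite IHn; exact Hz]. }
  assert (hb0 : 0 < 1/beta) by (apply Rdiv_lt_0_compat; lra).
  split.
  - intros Hn. apply Classical_Prop.NNPP. intros HC. apply Hn. intros x. split.
    + intros [hx [N HN]].
      assert (Hk : forall k, negbeta_Titer beta l (N + k) x =
                     (- beta) ^ k * negbeta_Titer beta l N x).
      { induction k as [|k IH].
        - rewrite Nat.add_0_r. simpl. ring.
        - rewrite Nat.add_succ_r. simpl. unfold negbeta_T.
          pose proof (HN (N + k)%nat ltac:(lia)) as Hd. unfold negbeta_digit in Hd.
          rewrite Hd, IH. simpl. ring. }
      assert (H0 : negbeta_Titer beta l N x = 0).
      { destruct (Req_dec (negbeta_Titer beta l N x) 0) as [E|E]; [exact E|].
        exfalso. set (a := negbeta_Titer beta l N x) in *.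
        assert (Ha : 0 < Rabs a) by (apply Rabs_pos_lt; exact E).
        assert (Hb : Rabs (- beta) > 1) by (rewrite Rabs_left; lra).
        destruct (Pow_x_infinity _ Hb (2 / Rabs a)) as [M HM].
        specialize (HM M (le_n M)).
        pose proof (Titer_range beta l x (N + M) hx) as Hr.
        rewrite Hk in Hr.
        assert (Rabs ((- beta) ^ M * a) >= 2).
        { rewrite Rabs_mult.
          apply Rle_ge. replace 2 with ((2 / Rabs a) * Rabs a) by (field; lra).
          apply Rmult_le_compat_r; lra. }
        unfold Rabs in H; destruct (Rcase_abs _) in H; lra. }
      destruct (iter_zero beta l x hbeta hl hx N H0) as [E|E]; [exact E|].
      contradiction.
    + intros ->. split; [lra|]. exists 0%nat. intros i _.
      unfold negbeta_digit. rewrite Hiz. apply floor_eq. simpl. lra.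
  - intros HC H.
    assert (Hg : forall x, l <= x < l + 1 -> negbeta_T beta l x = 0 ->
                 negbeta_Fin beta l x).
    { intros x hx Tx. split; [exact hx|]. exists 1%nat. intros i Hi.
      destruct i as [|i]; [lia|].
      assert (forall m, negbeta_Titer beta l (S m) x = 0).
      { induction m; simpl in *; [exact Tx| rewrite IHm; exact Hz]. }
      unfold negbeta_digit. rewrite H0. apply floor_eq. simpl. lra. }
    destruct HC as [HC|HC].
    + assert (E : - (1/beta) = 0).
      { apply H, Hg; [exact HC|]. unfold negbeta_T.
        replace (- beta * - (1 / beta)) with 1 by (field; lra).
        rewrite (floor_eq _ 1%Z); simpl; lra. }
      lra.
    + assert (E : 1/beta = 0).
      { apply H, Hg; [exact HC|]. unfold negbeta_T.
        replace (- beta * (1 / beta)) with (-1) by (field; lra).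
        rewrite (floor_eq _ (-1)%Z); simpl; lra. }
      lra.
Qed.
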